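(* Let $p\in[1,\infty)$, $w$ a weight sequence, and let $A\subset L_{p,w}$ be bounded in $\|\cdot\|_{p,w}$ and equinormed with respect to $\{\|\cdot\|_{p,w,i}\}_{i\in\mathbb{N}}$. Then $$\forall d>0\ \exists N\in\mathbb{N}\ \forall a\in A\ \forall n\ge N:\ |a_n|<d.$$
   Context: A weight sequence is a sequence $w=(w_i)$ of positive reals with $w_1=1\ge w_2\ge\dots$, $w_i\to0$, and $\sum_i w_i=+\infty$. For a real sequence $a$, $\|a\|_{p,w}=\sup_{\sigma}\big(\sum_{i=1}^\infty |a_{\sigma_i}|^p w_i\big)^{1/p}$ over all permutations $\sigma$ of $\mathbb{N}$, and $L_{p,w}$ is the set of real sequences with finite $\|\cdot\|_{p,w}$. For $i\in\mathbb{N}$, $\|a\|_{p,w,i}=\|(a_1,\dots,a_i,0,0,\dots)\|_{p,w}$. $A$ is equinormed if $\forall\varepsilon>0\ \exists i\ \forall a\in A:\ \|a\|_{p,w}\le\|a\|_{p,w,i}+\varepsilon$. *)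

(* Defs.v *)
(* R : realType. Sequences are 0-indexed (nat -> R). *)
From mathcomp Require Import all_boot all_order all_algebra.
From mathcomp Require Import all_classical all_reals all_analysis.
Set Implicit Arguments. Unset Strict Implicit. Unset Printing Implicit Defensive.
Import Order.TTheory GRing.Theory Num.Theory.
Local Open Scope classical_set_scope.
Local Open Scope ring_scope.

Definition weight_seq {R : realType} (w : nat -> R) : Prop :=
  w 0%N = 1 /\ (forall i, 0 < w i) /\ (forall i, w i.+1 <= w i) /\
  w @ \oo --> 0 /\ (\sum_(0 <= i <oo) (w i)%:E = +oo)%E.

Definition lorentz_norm {R : realType} (p : R) (w : nat -> R) (a : nat -> R)
  : \bar R :=
  ereal_sup [set ((\sum_(0 <= i <oo) ((`|a (s i)| `^ p) * w i)%:E) `^ p^-1)%E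
            | s in [set s : nat -> nat | bijective s]].

(* truncation (a_1,...,a_i,0,0,...) : in 0-indexed form, keep indices < i *)
Definition trunc {R : realType} (i : nat) (a : nat -> R) : nat -> R :=
  fun n => if (n < i)%N then a n else 0.

Definition lorentz_norm_i {R : realType} (p : R) (w : nat -> R) (i : nat)
  (a : nat -> R) : \bar R := lorentz_norm p w (trunc i a).

Definition L_pw {R : realType} (p : R) (w : nat -> R) : set (nat -> R) :=
  [set a | (lorentz_norm p w a < +oo)%E].

Definition norm_bounded {R : realType} (p : R) (w : nat -> R)
  (A : set (nat -> R)) : Prop :=
  exists M : R, forall a, A a -> (lorentz_norm p w a <= M%:E)%E.

Definition equinormed {R : realType} (p : R) (w : nat -> R)
  (A : set (nat -> R)) : Prop :=
  forall eps : R, 0 < eps -> exists i : nat, forall a, A a ->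
    (lorentz_norm p w a <= lorentz_norm_i p w i a + eps%:E)%E.

(* Main.v *)
Require Import Defs.
From mathcomp Require Import all_boot all_order all_algebra.
From mathcomp Require Import all_classical all_reals all_analysis.
From mathcomp Require Import ring lra.
Import Order.TTheory GRing.Theory Num.Theory.
Local Open Scope classical_set_scope.
Local Open Scope ring_scope.
Set Implicit Arguments. Unset Strict Implicit.

Section helpers.
Context {R : realType}.

Lemma powR_le (r x y : R) : 0 <= r -> 0 <= x -> x <= y -> x `^ r <= y `^ r.
Proof.
move=> r0 x0 xy; apply: ge0_ler_powR => //; rewrite nnegrE //.
exact: le_trans xy.
Qed.

Lemma powR_lt (r x y : R) : 0 < r -> 0 <= x -> x < y -> x `^ r < y `^ r.
Proof.
move=> r0 x0 xy; apply: gt0_ltr_powR => //; rewrite nnegrE //.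
exact: le_trans (ltW xy).
Qed.

Lemma powR_invK (p t : R) : 0 < p -> 0 <= t -> (t `^ p^-1) `^ p = t.
Proof. by move=> p0 t0; rewrite -powRrM mulVf ?gt_eqF // powRr1. Qed.

Lemma powR_Kinv (p t : R) : 0 < p -> 0 <= t -> (t `^ p) `^ p^-1 = t.
Proof. by move=> p0 t0; rewrite -powRrM mulfV ?gt_eqF // powRr1. Qed.

Lemma powR_inv_le (p t x : R) : 0 < p -> 0 <= t -> t `^ p^-1 <= x -> t <= x `^ p.
Proof.
move=> p0 t0 H; rewrite -(powR_invK p0 t0); apply: powR_le => //.
  exact: ltW. exact: powR_ge0.
Qed.

Lemma poweR_inv_le (p x : R) (S : \bar R) : 0 < p -> (0 <= S)%E ->
  (S `^ p^-1 <= x%:E)%E -> (S <= (x `^ p)%:E)%E.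
Proof.
move=> p0; case: S => [t| |] //.
- rewrite lee_fin => t0; rewrite poweR_EFin lee_fin => H.
  exact: powR_inv_le.
- by rewrite poweRyr ?invr_eq0 ?gt_eqF.
Qed.

Lemma w_mono (w : nat -> R) : weight_seq w -> forall m n, (m <= n)%N -> w n <= w m.
Proof.
move=> [_ [_ [Hd _]]] m n /subnK <-; elim: (n - m)%N => [|k IH].
  by rewrite add0n.
by rewrite addSn; apply: le_trans (Hd _) IH.
Qed.

Lemma w_big (w : nat -> R) (C : R) : weight_seq w ->
  exists m, C < \sum_(0 <= k < m) w k.
Proof.
move=> Hw; have [_ [w0 [_ [_ Hs]]]] := Hw.
apply/not_existsP => H.
have : (\sum_(0 <= i <oo) (w i)%:E <= C%:E)%E.
  apply: lime_le.
    by apply: is_cvg_nneseries => k _ _; rewrite lee_fin ltW.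
  apply: nearW => m; rewrite sumEFin lee_fin; rewrite leNgt; apply/negP => Hm.
  by apply: (H m).
by rewrite Hs leNgt ltey.
Qed.


Definition Ssum (p : R) (w : nat -> R) (a : nat -> R) (s : nat -> nat) : \bar R :=
  (\sum_(0 <= k <oo) ((`|a (s k)| `^ p) * w k)%:E)%E.

Lemma Ssum_ge0 p w a s : weight_seq w -> (0 <= Ssum p w a s)%E.
Proof.
move=> [_ [w0 _]]; apply: nneseries_ge0 => k _ _.
by rewrite lee_fin mulr_ge0 ?powR_ge0 ?ltW.
Qed.

Lemma norm_ge p w a s : bijective s ->
  ((Ssum p w a s) `^ p^-1 <= lorentz_norm p w a)%E.
Proof. by move=> bs; apply: ereal_sup_ubound; exists s. Qed.

Lemma norm_le p w a (Y : \bar R) :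
  (forall s, bijective s -> ((Ssum p w a s) `^ p^-1 <= Y)%E) ->
  (lorentz_norm p w a <= Y)%E.
Proof. by move=> H; apply: ge_ereal_sup => _ [s bs <-]; apply: H. Qed.


Lemma core p w a (i n m : nat) (d M : R) s :
  1 <= p -> weight_seq w -> 0 < d -> 0 <= M ->
  M `^ p < (d / 2) `^ p * \sum_(0 <= k < m) w k ->
  (lorentz_norm p w a <= M%:E)%E -> (i <= n)%N -> d <= `|a n| -> bijective s ->
  exists2 s', bijective s' &
   (Ssum p w (trunc i a) s + ((d `^ p - (d / 2) `^ p) * w m)%:E
      <= Ssum p w a s')%E.
Proof.
move=> p1 Hw d0 M0 HM Ha ni dn bs.
have p0 : 0 < p by apply: lt_le_trans p1.
have [_ [wpos _]] := Hw.
set b := trunc i a.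
have hb : forall k, `|b k| <= `|a k|.
  by move=> k; rewrite /b /trunc; case: ifP => // _; rewrite normr0.
have hbn : b n = 0 by rewrite /b /trunc ltnNge ni.
have d2 : 0 <= d / 2 by rewrite divr_ge0 // ltW.
case: (pselect (exists2 r, (r < m)%N & `|b (s r)| < d / 2)) => [[r rm hr]|Hno];
  last first.
  exfalso.
  have H2 := le_trans (norm_ge p w a bs) Ha.
  have H3 := poweR_inv_le p0 (Ssum_ge0 p a s Hw) H2.
  have H4 : (((d / 2) `^ p * \sum_(0 <= k < m) w k)%:E <= Ssum p w a s)%E.
    apply: le_trans (nneseries_lim_ge m _); last first.
      by move=> k _ _; rewrite lee_fin mulr_ge0 ?powR_ge0 ?ltW.
    rewrite sumEFin lee_fin mulr_sumr; apply: ler_sum_nat => k /andP[_ km].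
    apply: ler_wpM2r; first exact: ltW.
    apply: powR_le => //; first exact: ltW.
    apply: le_trans (hb _); rewrite leNgt; apply/negP => H.
    by apply: Hno; exists k.
  have := le_trans H4 H3; rewrite lee_fin leNgt HM //.
have [g sg gs] := bs.
pose q := g n.
have sq : s q = n := gs n.
pose sig k := if k == r then q else if k == q then r else k.
have sigK : involutive sig.
  by move=> k; rewrite /sig; do ![case: eqP => //=; try congruence].
exists (s \o sig); first by apply: bij_comp => //; exact: inv_bij.
rewrite /Ssum.
have ge0 : forall (c : nat -> R) k, (0 <= ((`|c k| `^ p) * w k)%:E)%E.
  by move=> c k; rewrite lee_fin mulr_ge0 ?powR_ge0 ?ltW.
rewrite (nneseriesD1 (n := r)) //; last by move=> k _; apply: (ge0 (b \o s)).
rewrite [X in (_ <= X)%E](nneseriesD1 (n := r)) //; last first.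
  by move=> k _; apply: (ge0 (a \o s \o sig)).
rewrite addeAC; apply: leeD.
  rewrite -EFinD lee_fin /= {1}/sig eqxx sq.
  have X1 : `|b (s r)| `^ p <= (d / 2) `^ p by apply: powR_le; [exact: ltW | exact: normr_ge0 | exact: ltW].
  have X2 : d `^ p <= `|a n| `^ p by apply: powR_le; [exact: ltW | exact: ltW | exact: dn].
  have X3 : (d / 2) `^ p <= d `^ p by apply: powR_le; [exact: ltW | exact: d2 | lra].
  have X4 : w m <= w r by apply: w_mono => //; apply: ltnW.
  have X5 : 0 < w m := wpos m.
  have X6 : 0 <= `|b (s r)| `^ p := powR_ge0 _ _.
  nra.
apply: lee_nneseries; first by move=> k _ _; apply: (ge0 (b \o s)).
move=> k /andP[_ kr]; rewrite lee_fin /= /sig (negPf kr).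
case: eqP => [->|_].
  rewrite sq hbn normr0 powR0 ?gt_eqF // mul0r.
  by apply: mulr_ge0; rewrite ?powR_ge0 ?ltW.
apply: ler_wpM2r; first exact: ltW.
by apply: powR_le; [exact: ltW | exact: normr_ge0 | exact: hb].
Qed.

Lemma powR_step (p K e y : R) : 1 <= p -> 0 <= y -> y <= K ->
  0 <= e -> e <= 1 -> (y + e) `^ p <= y `^ p + e * (K + 1) `^ p.
Proof.
move=> p1 y0 yK e0 e1.
have D1 : 1 <= K + 1 - y by rewrite -addrA [1 - y]addrC addrA lerDr subr_ge0.
have D0 : 0 < K + 1 - y by apply: lt_le_trans D1.
set l := e / (K + 1 - y).
have l0 : 0 <= l by rewrite divr_ge0 // ltW.
have le : l <= e by rewrite ler_pdivrMr // ler_peMr.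
have l1 : l <= 1 by apply: le_trans le e1.
have H := @convex_powR R p p1 (Itv01 l0 l1) (K + 1) y.
have Kin : (K + 1 : R^o) \in (`[0, +oo[%classic : set R).
  by rewrite inE /= in_itv /= andbT; apply: addr_ge0 => //; apply: le_trans yK.
have yin : (y : R^o) \in (`[0, +oo[%classic : set R).
  by rewrite inE /= in_itv /= andbT.
have {H} := H Kin yin.
rewrite !convRE /= => H.
set z := (X in X `^ p <= _) in H.
have E : z = y + e.
  change (l * (K + 1) + (1 - l) * y = y + e).
  rewrite /l; field; exact: lt0r_neq0.
rewrite E in H; apply: (le_trans H).
have P0 : 0 <= (K + 1) `^ p by apply: powR_ge0.
have Py : 0 <= y `^ p by apply: powR_ge0.
rewrite addrC; apply: lerD.
  by rewrite ler_piMl // gerBl.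
by apply: ler_wpM2r.
Qed.

End helpers.

Unset Implicit Arguments.
Set Strict Implicit.

Theorem mainTheorem9 (R : realType) (p : R) (w : nat -> R)
  (A : set (nat -> R)) :
  1 <= p -> weight_seq w -> A `<=` L_pw p w ->
  norm_bounded p w A -> equinormed p w A ->
  forall d : R, 0 < d -> exists N : nat, forall a, A a ->
    forall n : nat, (N <= n)%N -> `|a n| < d.
Proof.
move=> p1 Hw AL [M0 HM0] Heq d d0.
have p0 : 0 < p by apply: lt_le_trans p1.
have [_ [wpos _]] := Hw.
pose M := Num.max M0 0.
have M0' : 0 <= M by rewrite le_max lexx orbT.
have HM : forall a, A a -> (lorentz_norm p w a <= M%:E)%E.
  by move=> a Aa; apply: le_trans (HM0 a Aa) _; rewrite lee_fin le_max lexx.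
have d2 : 0 < d / 2 by rewrite divr_gt0.
have d2p : 0 < (d / 2) `^ p by apply: powR_gt0.
have [m Hm] := w_big (M `^ p / (d / 2) `^ p) Hw.
have Hm' : M `^ p < (d / 2) `^ p * \sum_(0 <= k < m) w k.
  by move: Hm; rewrite ltr_pdivrMr // mulrC.
pose δ := (d `^ p - (d / 2) `^ p) * w m.
have δ0 : 0 < δ.
  apply: mulr_gt0 (wpos m); rewrite subr_gt0; apply: powR_lt => //; first exact: ltW.
  lra.
pose K := (M + 1) `^ p.
have K0 : 0 <= K := powR_ge0 _ _.
pose eps := δ / (K + δ).
have eps0 : 0 < eps by rewrite divr_gt0 // ltr_wpDl.
have eps1 : eps <= 1 by rewrite ler_pdivrMr ?mul1r ?ltr_wpDl // lerDr.
have epsK : eps * K < δ.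
  rewrite mulrAC ltr_pdivrMr ?ltr_wpDl //; nra.
have [i Hi] := Heq eps eps0.
exists i => a Aa n ni; rewrite ltNge; apply/negP => dn.
have bid : bijective (@id nat) by exists id.
have X0 : (0 <= lorentz_norm p w a)%E.
  exact: le_trans (poweR_ge0 _ _) (norm_ge p w a bid).
have [x [Ex [x0 xM]]] : exists x, lorentz_norm p w a = x%:E /\ 0 <= x /\ x <= M.
  move: X0 (HM a Aa); case: (lorentz_norm p w a) => [x| |] //.
  by rewrite !lee_fin => ? ?; exists x.
have Sa : forall s, bijective s -> (Ssum p w a s <= (x `^ p)%:E)%E.
  move=> s bs; apply: poweR_inv_le => //; first exact: Ssum_ge0.
  by rewrite -Ex; apply: norm_ge.
have Sb : forall s, bijective s ->
    (Ssum p w (trunc i a) s <= (x `^ p - δ)%:E)%E.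
  move=> s bs; have [s' bs' H] := core p1 Hw d0 M0' Hm' (HM a Aa) ni dn bs.
  have H2 := le_trans H (Sa s' bs').
  move: H2 (Ssum_ge0 p (trunc i a) s Hw).
  case: (Ssum p w (trunc i a) s) => [t| |] //.
  by rewrite -EFinD !lee_fin /= -/δ => ? ?; lra.
have xpd : 0 <= x `^ p - δ.
  by rewrite -lee_fin; apply: le_trans (Sb _ bid); apply: Ssum_ge0.
pose y := (x `^ p - δ) `^ p^-1.
have Nb : (lorentz_norm p w (trunc i a) <= y%:E)%E.
  apply: norm_le => s bs; rewrite /y -poweR_EFin.
  apply: gt0_ler_poweR; first by rewrite invr_ge0 ltW.
  - by rewrite in_itv /= Ssum_ge0 ?leey.
  - by rewrite in_itv /= lee_fin xpd leey.
  - exact: Sb.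
have := Hi a Aa; rewrite /lorentz_norm_i Ex => H.
have xy : x <= y + eps.
  by rewrite -lee_fin EFinD; apply: le_trans H _; apply: leeD.
have y0 : 0 <= y := powR_ge0 _ _.
have yx : y <= x.
  rewrite /y -{2}(powR_Kinv p0 x0); apply: powR_le => //.
    by rewrite invr_ge0 ltW.
  lra.
have yp : y `^ p = x `^ p - δ by rewrite /y powR_invK.
have H1 : x `^ p <= (y + eps) `^ p by apply: powR_le => //; exact: ltW.
have H2 : (y + eps) `^ p <= y `^ p + eps * (M + 1) `^ p.
  apply: powR_step => //; [exact: le_trans xM | exact: ltW].
rewrite -/K in H2; lra.
Qed.
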